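(* Let $\mathcal{D}$ be an open derivation and let $\mathsf{S}(\mathcal{D})$ be the maximum number of $?$-formulas in the conclusion of a $\mathsf{cp}$ rule of $\mathcal{D}$. If $\mathcal{D}= \mathcal{D}_0 \to_{\mathsf{cut}} \cdots \to_{\mathsf{cut}}\mathcal{D}_n$ then: \begin{enumerate} \item $n$ and $|\mathcal{D}_i|$ are in $\mathcal{O}(\mathsf{S}(\mathcal{D})^3\cdot| \mathcal{D} |^3)$ for any $i\in\{0,\dots,n\}$. \item If only principal cut-elimination steps are applied then $n$ and $|\mathcal{D}_i|$ are in $\mathcal{O}(\mathsf{S}(\mathcal{D})\cdot| \mathcal{D} |)$ for any $i\in\{0,\dots,n\}$. \item If the reduction sequence is maximal then $\mathcal{D}_n$ is cut free. \end{enumerate}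
   Context: Formulas: $A ::= X \mid X^\perp \mid A\otimes A \mid A ⅋ A \mid {!A} \mid {?A} \mid \mathbf{1} \mid \bot \mid \forall X.A \mid \exists X.A$. The rules are axiom, cut, $\otimes$, $⅋$, $\mathbf{1}$, $\bot$, weakening $?\mathsf{w}$ (from $\Gamma$ infer $\Gamma,?A$), absorption $?\mathsf{b}$ (from $\Gamma,A,?A$ infer $\Gamma,?A$), $\forall$, $\exists$ (instantiating only $(!,?)$-free formulas), conditional promotion $\mathsf{cp}$ (from $\Gamma,A$ and $?\Gamma,!A$ infer $?\Gamma,!A$), plus the rule $\mathsf{hyp}$ with no premises and arbitrary conclusion. An open derivation is a finite derivation over these rules; $|\mathcal{D}|$ is its number of rule instances. Cut-elimination $\to_{\mathsf{cut}}$: standard multiplicative, second-order and commutative steps (the latter permute a cut above a non-cut rule), and principal exponential steps: cut of two $\mathsf{cp}$ rules becomes a $\mathsf{cp}$ whose premises are the cuts of the respective left and right premises; cut of $\mathsf{cp}$ (conclusion $?\Gamma,!A$) against $?\mathsf{w}$ on $?A^\perp$ becomes $|\Gamma|$ weakenings; cut of $\mathsf{cp}$ against $?\mathsf{b}$ (premise $\Delta,A^\perp,?A^\perp$) becomes a cut of the left premise $\Gamma,A$ against $A^\perp$ and of the right premise $?\Gamma,!A$ against $?A^\perp$, followed by $|\Gamma|$ absorptions. Non-commutative steps are called principal. *)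

(* Defs.v *)
From Stdlib Require Import List Arith Permutation.
Import ListNotations.

Inductive formula : Type :=
| Var : nat -> formula
| Dual : nat -> formula
| Tens : formula -> formula -> formula
| Par : formula -> formula -> formula
| OfC : formula -> formula
| WhyNot : formula -> formula
| One : formula
| Bot : formula
| All : formula -> formula      (* forall X. A, binds index 0 *)
| Ex : formula -> formula.      (* exists X. A, binds index 0 *)

Fixpoint dual (A : formula) : formula :=
  match A with
  | Var n => Dual n
  | Dual n => Var n
  | Tens A B => Par (dual A) (dual B)
  | Par A B => Tens (dual A) (dual B)
  | OfC A => WhyNot (dual A)
  | WhyNot A => OfC (dual A)
  | One => Bot
  | Bot => One
  | All A => Ex (dual A)
  | Ex A => All (dual A)
  end.

Fixpoint lift (k : nat) (A : formula) : formula :=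
  match A with
  | Var n => Var (if n <? k then n else S n)
  | Dual n => Dual (if n <? k then n else S n)
  | Tens A B => Tens (lift k A) (lift k B)
  | Par A B => Par (lift k A) (lift k B)
  | OfC A => OfC (lift k A)
  | WhyNot A => WhyNot (lift k A)
  | One => One
  | Bot => Bot
  | All A => All (lift (S k) A)
  | Ex A => Ex (lift (S k) A)
  end.

(* substitute B (already living at depth k) for index k, decrementing larger ones *)
Fixpoint subst (k : nat) (B : formula) (A : formula) : formula :=
  match A with
  | Var n => if n <? k then Var n else if n =? k then B else Var (pred n)
  | Dual n => if n <? k then Dual n else if n =? k then dual B else Dual (pred n)
  | Tens A1 A2 => Tens (subst k B A1) (subst k B A2)
  | Par A1 A2 => Par (subst k B A1) (subst k B A2)
  | OfC A1 => OfC (subst k B A1)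
  | WhyNot A1 => WhyNot (subst k B A1)
  | One => One
  | Bot => Bot
  | All A1 => All (subst (S k) (lift 0 B) A1)
  | Ex A1 => Ex (subst (S k) (lift 0 B) A1)
  end.

(* (!,?)-free formulas: the only ones allowed as exists-witnesses *)
Fixpoint qfree (A : formula) : Prop :=
  match A with
  | Var _ | Dual _ | One | Bot => True
  | Tens A B | Par A B => qfree A /\ qfree B
  | OfC _ | WhyNot _ => False
  | All A | Ex A => qfree A
  end.

Definition is_whynot (A : formula) : bool :=
  match A with WhyNot _ => true | _ => false end.

(* rule labels carry the principal data *)
Inductive rule : Type :=
| RAx : formula -> rule
| RCut : formula -> rule           (* cut on A (left premise has A, right has A^perp) *)
| RTens : formula -> formula -> rule
| RPar : formula -> formula -> rule
| ROne : rule
| RBot : rule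
| RWk : formula -> rule
| RAbs : formula -> rule
| RAll : formula -> rule           (* introduces forall X. A ; A is the body *)
| REx : formula -> formula -> rule (* introduces exists X. A with witness B *)
| RCp : formula -> rule
| RHyp : rule.

(* a node: rule instance, its conclusion sequent (a list read up to permutation,
   i.e. a multiset), and its premises *)
Inductive deriv : Type :=
| Node : rule -> list formula -> list deriv -> deriv.

Definition concl (d : deriv) : list formula :=
  match d with Node _ G _ => G end.

Inductive valid : deriv -> Prop :=
| v_ax : forall A G, Permutation G [A; dual A] -> valid (Node (RAx A) G [])
| v_cut : forall A G d1 d2 G1 G2, valid d1 -> valid d2 ->
    Permutation (concl d1) (A :: G1) -> Permutation (concl d2) (dual A :: G2) ->
    Permutation G (G1 ++ G2) -> valid (Node (RCut A) G [d1; d2])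
| v_tens : forall A B G d1 d2 G1 G2, valid d1 -> valid d2 ->
    Permutation (concl d1) (A :: G1) -> Permutation (concl d2) (B :: G2) ->
    Permutation G (Tens A B :: G1 ++ G2) -> valid (Node (RTens A B) G [d1; d2])
| v_par : forall A B G d D, valid d ->
    Permutation (concl d) (A :: B :: D) -> Permutation G (Par A B :: D) ->
    valid (Node (RPar A B) G [d])
| v_one : forall G, Permutation G [One] -> valid (Node ROne G [])
| v_bot : forall G d, valid d -> Permutation G (Bot :: concl d) -> valid (Node RBot G [d])
| v_wk : forall A G d, valid d -> Permutation G (WhyNot A :: concl d) ->
    valid (Node (RWk A) G [d])
| v_abs : forall A G d D, valid d ->
    Permutation (concl d) (A :: WhyNot A :: D) -> Permutation G (WhyNot A :: D) ->
    valid (Node (RAbs A) G [d])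
| v_all : forall A G d D, valid d ->
    Permutation (concl d) (A :: map (lift 0) D) -> Permutation G (All A :: D) ->
    valid (Node (RAll A) G [d])
| v_ex : forall A B G d D, valid d -> qfree B ->
    Permutation (concl d) (subst 0 B A :: D) -> Permutation G (Ex A :: D) ->
    valid (Node (REx A B) G [d])
| v_cp : forall A G d1 d2 D, valid d1 -> valid d2 ->
    Permutation (concl d1) (A :: D) ->
    Permutation (concl d2) (OfC A :: map WhyNot D) ->
    Permutation G (OfC A :: map WhyNot D) -> valid (Node (RCp A) G [d1; d2])
| v_hyp : forall G, valid (Node RHyp G []).

Fixpoint size (d : deriv) : nat :=
  match d with Node _ _ ps => S (list_sum (map size ps)) end.

Definition is_cp (r : rule) : bool := match r with RCp _ => true | _ => false end.
Definition is_cut (r : rule) : bool := match r with RCut _ => true | _ => false end.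
Definition is_all (r : rule) : bool := match r with RAll _ => true | _ => false end.

Fixpoint Sgen (d : deriv) : nat :=
  match d with
  | Node r G ps =>
      Nat.max (if is_cp r then length (filter is_whynot G) else 0)
              (list_max (map Sgen ps))
  end.

Fixpoint has_cut (d : deriv) : bool :=
  match d with Node r _ ps => is_cut r || existsb has_cut ps end.

Definition cut_free (d : deriv) : Prop := has_cut d = false.

Definition rmap (f : nat -> formula -> formula) (k : nat) (r : rule) : rule :=
  match r with
  | RAx A => RAx (f k A)
  | RCut A => RCut (f k A)
  | RTens A B => RTens (f k A) (f k B)
  | RPar A B => RPar (f k A) (f k B)
  | ROne => ROne
  | RBot => RBot
  | RWk A => RWk (f k A)
  | RAbs A => RAbs (f k A)
  | RAll A => RAll (f (S k) A)
  | REx A B => REx (f (S k) A) (f k B)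
  | RCp A => RCp (f k A)
  | RHyp => RHyp
  end.

Fixpoint dmap (f : nat -> formula -> formula) (k : nat) (d : deriv) : deriv :=
  match d with
  | Node r G ps =>
      Node (rmap f k r) (map (f k) G)
           (map (dmap f (if is_all r then S k else k)) ps)
  end.

Definition dlift (d : deriv) : deriv := dmap lift 0 d.
Definition dsubst (B : formula) (d : deriv) : deriv :=
  dmap (fun k => subst k (Nat.iter k (lift 0) B)) 0 d.

Inductive kind : Type := Princ | Comm.

Inductive wk_stack : list formula -> deriv -> deriv -> Prop :=
| wk_nil : forall p, wk_stack [] p p
| wk_cons : forall E l p t G, wk_stack l p t -> wk_stack (E :: l) p (Node (RWk E) G [t]).

Inductive abs_stack : list formula -> deriv -> deriv -> Prop :=
| abs_nil : forall p, abs_stack [] p p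
| abs_cons : forall E l p t G, abs_stack l p t ->
    abs_stack (E :: l) p (Node (RAbs E) G [t]).

(* principal formula of a (non-cut) rule with context *)
Inductive unary_comm : rule -> formula -> Prop :=
| uc_par : forall A B, unary_comm (RPar A B) (Par A B)
| uc_bot : unary_comm RBot Bot
| uc_wk : forall A, unary_comm (RWk A) (WhyNot A)
| uc_abs : forall A, unary_comm (RAbs A) (WhyNot A)
| uc_ex : forall A B, unary_comm (REx A B) (Ex A).

(* redex k C d1 d2 res : a cut on C between d1 (containing C) and d2
   (containing C^perp) rewrites to res.  Conclusions of the new inner nodes
   are left free; they are constrained by validity of the result. *)
Inductive redex : kind -> formula -> deriv -> deriv -> deriv -> Prop :=
| r_ax : forall C A G1 d2, redex Princ C (Node (RAx A) G1 []) d2 d2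
| r_tens : forall A B G1 G2 p1 p2 q D D',
    redex Princ (Tens A B) (Node (RTens A B) G1 [p1; p2])
      (Node (RPar (dual A) (dual B)) G2 [q])
      (Node (RCut A) D [p1; Node (RCut B) D' [p2; q]])
| r_one : forall G1 G2 q,
    redex Princ One (Node ROne G1 []) (Node RBot G2 [q]) q
| r_all : forall A B G1 G2 p q D,
    redex Princ (All A) (Node (RAll A) G1 [p]) (Node (REx (dual A) B) G2 [q])
      (Node (RCut (subst 0 B A)) D [dsubst B p; q])
| r_cpcp : forall A E G1 G2 p1 q1 p2 q2 D D1 D2,
    redex Princ (OfC A) (Node (RCp A) G1 [p1; q1]) (Node (RCp E) G2 [p2; q2])
      (Node (RCp E) D [Node (RCut A) D1 [p1; p2]; Node (RCut (OfC A)) D2 [q1; q2]])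
| r_cpw : forall A G1 G2 p q pi l res,
    Permutation G1 (OfC A :: map WhyNot l) ->
    wk_stack l pi res ->
    redex Princ (OfC A) (Node (RCp A) G1 [p; q]) (Node (RWk (dual A)) G2 [pi]) res
| r_cpb : forall A G1 G2 p q pi l D D' res,
    Permutation G1 (OfC A :: map WhyNot l) ->
    abs_stack l (Node (RCut A) D [p; Node (RCut (OfC A)) D' [q; pi]]) res ->
    redex Princ (OfC A) (Node (RCp A) G1 [p; q]) (Node (RAbs (dual A)) G2 [pi]) res
(* commutative steps: the cut formula C is in the context of the last rule of d1 *)
| c_hyp : forall C G1 d2 D, redex Comm C (Node RHyp G1 []) d2 (Node RHyp D [])
| c_unary : forall C r P G1 ctx p d2 D D',
    unary_comm r P -> Permutation G1 (P :: ctx) -> In C ctx ->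
    redex Comm C (Node r G1 [p]) d2 (Node r D [Node (RCut C) D' [p; d2]])
| c_all : forall C A G1 ctx p d2 D D',
    Permutation G1 (All A :: ctx) -> In C ctx ->
    redex Comm C (Node (RAll A) G1 [p]) d2
      (Node (RAll A) D [Node (RCut (lift 0 C)) D' [p; dlift d2]])
| c_tens_l : forall C A B G1 ctx p1 p2 d2 D D',
    Permutation G1 (Tens A B :: ctx) -> In C ctx ->
    redex Comm C (Node (RTens A B) G1 [p1; p2]) d2
      (Node (RTens A B) D [Node (RCut C) D' [p1; d2]; p2])
| c_tens_r : forall C A B G1 ctx p1 p2 d2 D D',
    Permutation G1 (Tens A B :: ctx) -> In C ctx ->
    redex Comm C (Node (RTens A B) G1 [p1; p2]) d2
      (Node (RTens A B) D [p1; Node (RCut C) D' [p2; d2]]).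

(* one step, at the root (cut is symmetric) or inside any premise *)
Inductive step : kind -> deriv -> deriv -> Prop :=
| st_root : forall k C G d1 d2 res,
    (redex k C d1 d2 res \/ redex k (dual C) d2 d1 res) ->
    Permutation (concl res) G ->
    step k (Node (RCut C) G [d1; d2]) res
| st_ctx : forall k r G ps1 d d' ps2,
    step k d d' -> step k (Node r G (ps1 ++ d :: ps2)) (Node r G (ps1 ++ d' :: ps2)).

Definition cut_step (k : kind) (d d' : deriv) : Prop := step k d d' /\ valid d'.

Definition reduction_seq (allowed : kind -> Prop) (Ds : nat -> deriv) (n : nat) : Prop :=
  forall i, i < n -> exists k, allowed k /\ cut_step k (Ds i) (Ds (S i)).

Definition normal (d : deriv) : Prop := ~ exists k d', cut_step k d d'.

(* Main.v *)
Require Import Defs.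
From Stdlib Require Import List Arith Lia Permutation.
Import ListNotations.


Lemma formula_eq_dec : forall x y : formula, {x = y} + {x <> y}.
Proof. decide equality; apply Nat.eq_dec. Qed.

Lemma dual_involutive : forall A, dual (dual A) = A.
Proof. induction A; simpl; congruence. Qed.

Ltac nat_cases := simpl; repeat (cbn -[Nat.eqb Nat.ltb]; match goal with
 | |- context [?a <? ?b] => destruct (Nat.ltb_spec a b)
 | |- context [?a =? ?b] => destruct (Nat.eqb_spec a b)
 end); try lia.

Lemma lift_dual : forall A k, lift k (dual A) = dual (lift k A).
Proof. induction A; intros k; simpl; try congruence. Qed.

Lemma subst_dual : forall A k B, subst k B (dual A) = dual (subst k B A).
Proof.
  induction A; intros k B; simpl; try congruence.
  - nat_cases; auto.
  - nat_cases; try rewrite dual_involutive; auto.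
Qed.

Lemma lift_lift : forall A i j, i <= j -> lift i (lift j A) = lift (S j) (lift i A).
Proof.
  induction A; intros i j Hij; simpl; try (f_equal; auto; apply IHA; lia);
  try (f_equal; auto; fail).
  all: f_equal; nat_cases.
Qed.

Lemma subst_lift_cancel : forall A k B, subst k B (lift k A) = A.
Proof.
  induction A; intros k B; simpl; try (f_equal; auto; fail).
  all: nat_cases; try (f_equal; lia); try reflexivity.
Qed.

Lemma subst_lift_comm : forall A j k C, j <= k ->
  subst (S k) (lift j C) (lift j A) = lift j (subst k C A).
Proof.
  induction A; intros j k C Hjk; simpl; try (f_equal; auto; fail).
  - nat_cases; try (f_equal; lia); reflexivity.
  - nat_cases; try (f_equal; lia); now rewrite lift_dual.
  - f_equal. rewrite <- IHA by lia. f_equal. apply lift_lift; lia.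
  - f_equal. rewrite <- IHA by lia. f_equal. apply lift_lift; lia.
Qed.

Lemma lift_subst : forall A j k B, j <= k ->
  lift k (subst j B A) = subst j (lift k B) (lift (S k) A).
Proof.
  induction A; intros j k B Hjk; simpl; try (f_equal; auto; fail).
  - nat_cases; try (f_equal; lia); reflexivity.
  - nat_cases; try (f_equal; lia); now rewrite lift_dual.
  - f_equal. rewrite IHA by lia. f_equal. symmetry; apply lift_lift; lia.
  - f_equal. rewrite IHA by lia. f_equal. symmetry; apply lift_lift; lia.
Qed.

Lemma subst_subst : forall A j k B C, j <= k ->
  subst k C (subst j B A) = subst j (subst k C B) (subst (S k) (lift j C) A).
Proof.
  induction A; intros j k B C Hjk; simpl; try (f_equal; auto; fail).
  - nat_cases; try (f_equal; lia); try reflexivity.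
    + rewrite subst_lift_cancel; reflexivity.
  - nat_cases; try (f_equal; lia); try reflexivity.
    + apply subst_dual.
    + rewrite subst_dual, subst_lift_cancel; reflexivity.
  - f_equal. rewrite IHA by lia. f_equal.
    + apply subst_lift_comm; lia.
    + f_equal. symmetry; apply lift_lift; lia.
  - f_equal. rewrite IHA by lia. f_equal.
    + apply subst_lift_comm; lia.
    + f_equal. symmetry; apply lift_lift; lia.
Qed.

Lemma qfree_dual : forall A, qfree A -> qfree (dual A).
Proof. induction A; simpl; tauto. Qed.
Lemma qfree_lift : forall A k, qfree A -> qfree (lift k A).
Proof. induction A; simpl; intros; try tauto; auto; split; try apply IHA1; try apply IHA2; tauto. Qed.
Lemma qfree_subst : forall A k B, qfree B -> qfree A -> qfree (subst k B A).
Proof.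
  induction A; intros k B HB HA; simpl in *;
    try (destruct HA; split; auto; fail); try tauto; auto using qfree_lift.
  - nat_cases; simpl; auto.
  - nat_cases; simpl; auto using qfree_dual.
Qed.

Fixpoint deriv_ind' (P : deriv -> Prop)
  (H : forall r G ps, Forall P ps -> P (Node r G ps)) (d : deriv) : P d :=
  match d with
  | Node r G ps => H r G ps
      ((fix go (l : list deriv) : Forall P l :=
          match l with
          | [] => @Forall_nil _ P
          | x :: l' => @Forall_cons _ P x l' (deriv_ind' P H x) (go l')
          end) ps)
  end.

Definition cnt (l : list formula) (x : formula) : nat := count_occ formula_eq_dec l x.
Definition ind (a x : formula) : nat := if formula_eq_dec a x then 1 else 0.
Arguments cnt : simpl never.
Arguments ind : simpl never.

Lemma cnt_cons : forall a l x, cnt (a :: l) x = ind a x + cnt l x.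
Proof. intros. unfold cnt, ind. simpl. destruct (formula_eq_dec a x); lia. Qed.
Lemma cnt_nil : forall x, cnt [] x = 0.
Proof. reflexivity. Qed.
Lemma cnt_app : forall l1 l2 x, cnt (l1 ++ l2) x = cnt l1 x + cnt l2 x.
Proof. intros. unfold cnt. apply count_occ_app. Qed.
Lemma perm_cnt : forall l1 l2, Permutation l1 l2 <-> forall x, cnt l1 x = cnt l2 x.
Proof. intros. unfold cnt. apply Permutation_count_occ. Qed.

Ltac perm :=
  repeat match goal with H : Permutation _ _ |- _ =>
    let H' := fresh "Hc" in pose proof (proj1 (perm_cnt _ _) H) as H'; clear H end;
  apply perm_cnt; let x := fresh "x" in intro x;
  repeat match goal with H : forall y : formula, cnt _ y = cnt _ y |- _ => specialize (H x) end;
  rewrite ?map_app in *; cbn [map app concl dual] in *;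
  repeat progress (rewrite ?cnt_cons, ?cnt_app, ?cnt_nil in *); lia.

Lemma concl_dmap : forall f k d, concl (dmap f k d) = map (f k) (concl d).
Proof. intros f k [r G ps]; reflexivity. Qed.

Section DM.
Variable F : nat -> formula -> formula.
Hypothesis Hdual : forall k A, F k (dual A) = dual (F k A).
Hypothesis Htens : forall k A B, F k (Tens A B) = Tens (F k A) (F k B).
Hypothesis Hpar : forall k A B, F k (Par A B) = Par (F k A) (F k B).
Hypothesis Hofc : forall k A, F k (OfC A) = OfC (F k A).
Hypothesis Hwhy : forall k A, F k (WhyNot A) = WhyNot (F k A).
Hypothesis Hone : forall k, F k One = One.
Hypothesis Hbot : forall k, F k Bot = Bot.
Hypothesis Hall : forall k A, F k (All A) = All (F (S k) A).
Hypothesis Hex : forall k A, F k (Ex A) = Ex (F (S k) A).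
Hypothesis Hlift : forall k A, F (S k) (lift 0 A) = lift 0 (F k A).
Hypothesis Hsubst : forall k A B, F k (subst 0 B A) = subst 0 (F k B) (F (S k) A).
Hypothesis Hq : forall k B, qfree B -> qfree (F k B).

Ltac pm H k := apply (Permutation_map (F k)) in H; simpl in H;
  rewrite ?map_app, ?Hdual, ?Htens, ?Hpar, ?Hofc, ?Hwhy, ?Hone, ?Hbot, ?Hall, ?Hex, ?Hsubst in H;
  rewrite ?concl_dmap; exact H.

Lemma map_lift_comm : forall k D, map (F (S k)) (map (lift 0) D) = map (lift 0) (map (F k) D).
Proof. intros. rewrite !map_map. apply map_ext. auto. Qed.
Lemma map_why_comm : forall k D, map (F k) (map WhyNot D) = map WhyNot (map (F k) D).
Proof. intros. rewrite !map_map. apply map_ext. auto. Qed.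

Lemma valid_dmap : forall d, valid d -> forall k, valid (dmap F k d).
Proof.
  induction 1; intros k; simpl.
  - constructor. pm H k.
  - apply v_cut with (G1 := map (F k) G1) (G2 := map (F k) G2); auto; [pm H1 k|pm H2 k|pm H3 k].
  - apply v_tens with (G1 := map (F k) G1) (G2 := map (F k) G2); auto; [pm H1 k|pm H2 k|pm H3 k].
  - apply v_par with (D := map (F k) D); auto; [pm H0 k|pm H1 k].
  - constructor. pm H k.
  - constructor; auto. pm H0 k.
  - constructor; auto. pm H0 k.
  - apply v_abs with (D := map (F k) D); auto; [pm H0 k|pm H1 k].
  - apply v_all with (D := map (F k) D); auto; [|pm H1 k].
    rewrite <- map_lift_comm. pm H0 (S k).
  - apply v_ex with (D := map (F k) D); auto; [pm H1 k|pm H2 k].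
  - apply v_cp with (D := map (F k) D); auto; rewrite <- ?map_why_comm; [pm H1 k|pm H2 k|pm H3 k].
  - constructor.
Qed.
End DM.

Lemma valid_dlift : forall d, valid d -> valid (dlift d).
Proof.
  intros d H. unfold dlift. apply valid_dmap; auto; intros; simpl; auto.
  - apply lift_dual.
  - symmetry. apply lift_lift. lia.
  - apply lift_subst. lia.
  - apply qfree_lift; auto.
Qed.

Lemma qfree_iter : forall k B, qfree B -> qfree (Nat.iter k (lift 0) B).
Proof. induction k; simpl; auto using qfree_lift. Qed.

Lemma valid_dsubst : forall B d, qfree B -> valid d -> valid (dsubst B d).
Proof.
  intros B d HB H. unfold dsubst. apply valid_dmap; auto; intros; simpl; auto.
  - apply subst_dual.
  - apply subst_lift_comm. lia.
  - apply subst_subst. lia.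
  - apply qfree_subst; auto using qfree_iter.
Qed.

Definition w (r : rule) (G : list formula) : nat :=
  match r with RCut _ => 1 | RCp _ => 3 + 2 * length G | _ => 2 end.
Fixpoint M (d : deriv) : nat :=
  match d with Node r G ps => w r G + list_sum (map M ps) end.
Fixpoint Phi (d : deriv) : nat :=
  match d with Node r G ps =>
    (if is_cut r then size (Node r G ps) else 0) + list_sum (map Phi ps) end.

Lemma sum_dmap : forall (X : deriv -> nat) f k' ps,
  Forall (fun p => forall k, X (dmap f k p) = X p) ps ->
  list_sum (map X (map (dmap f k') ps)) = list_sum (map X ps).
Proof. induction 1; simpl; auto. Qed.

Lemma size_dmap : forall f d k, size (dmap f k d) = size d.
Proof.
  intros f d. induction d using deriv_ind'. intros k. simpl.
  f_equal. apply (sum_dmap size). auto.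
Qed.

Lemma M_dmap : forall f d k, M (dmap f k d) = M d.
Proof.
  intros f d. induction d using deriv_ind'. intros k. simpl.
  rewrite (sum_dmap M); auto. f_equal.
  destruct r; simpl; rewrite ?length_map; auto.
Qed.

Lemma is_cut_rmap : forall f k r, is_cut (rmap f k r) = is_cut r.
Proof. destruct r; reflexivity. Qed.

Lemma Phi_dmap : forall f d k, Phi (dmap f k d) = Phi d.
Proof.
  intros f d. induction d using deriv_ind'. intros k.
  change (Phi (dmap f k (Node r G ps))) with
   ((if is_cut (rmap f k r) then size (dmap f k (Node r G ps)) else 0)
    + list_sum (map Phi (map (dmap f (if is_all r then S k else k)) ps))).
  rewrite is_cut_rmap, size_dmap, (sum_dmap Phi); auto.
Qed.

Lemma M_pos : forall d, 1 <= M d.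
Proof. intros [r G ps]; simpl; destruct r; simpl; lia. Qed.

Lemma size_le_M : forall d, size d <= M d.
Proof.
  intros d. induction d using deriv_ind'. simpl.
  assert (list_sum (map size ps) <= list_sum (map M ps)).
  { induction H; simpl; lia. }
  destruct r; simpl; lia.
Qed.

Lemma Phi_le : forall d, Phi d <= size d * size d.
Proof.
  intros d. induction d using deriv_ind'.
  assert (list_sum (map Phi ps) <= list_sum (map size ps) * list_sum (map size ps)).
  { induction H; simpl; nia. }
  simpl. destruct (is_cut r); simpl; nia.
Qed.

Lemma valid_sub : forall r G ps p, valid (Node r G ps) -> In p ps -> valid p.
Proof.
  intros r G ps p H Hin. inversion H; subst; simpl in Hin;
  repeat (destruct Hin as [<-|Hin]; auto); contradiction.
Qed.

Lemma wk_M : forall l p t, wk_stack l p t -> M t = 2 * length l + M p /\ size t = length l + size p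
  /\ Phi t = Phi p.
Proof. induction 1; simpl; lia. Qed.
Lemma abs_M : forall l p t, abs_stack l p t -> M t = 2 * length l + M p /\ size t = length l + size p.
Proof. induction 1; simpl; lia. Qed.

Lemma redex_measure : forall k C a b res, redex k C a b res ->
  length (concl res) + 2 = length (concl a) + length (concl b) ->
  (k = Princ -> M res < 1 + M a + M b) /\
  (k = Comm -> M res <= 1 + M a + M b /\ size res <= 1 + size a + size b /\
               Phi res < 1 + size a + size b + Phi a + Phi b).
Proof.
  intros k C a b res H Hlen. destruct H; split; intros Hk; try discriminate.
  - simpl. lia.
  - simpl. lia.
  - simpl. lia.
  - simpl. unfold dsubst. rewrite M_dmap. lia.
  - simpl in *. pose proof (M_pos p1). lia.
  - apply wk_M in H0. apply Permutation_length in H. simpl in H.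
    rewrite length_map in H. pose proof (M_pos p). pose proof (M_pos q).
    simpl. lia.
  - apply abs_M in H0. apply Permutation_length in H. simpl in H.
    rewrite length_map in H. simpl in H0. simpl. lia.
  - simpl. lia.
  - destruct H; simpl; lia.
  - unfold dlift. simpl. rewrite M_dmap, size_dmap, Phi_dmap. lia.
  - simpl. lia.
  - simpl. lia.
Qed.

Lemma cut_len : forall C G d1 d2, valid (Node (RCut C) G [d1; d2]) ->
  length G + 2 = length (concl d1) + length (concl d2).
Proof.
  intros. inversion H; subst.
  repeat match goal with H : Permutation _ _ |- _ => apply Permutation_length in H end.
  rewrite length_app in *. simpl in *. lia.
Qed.

Lemma step_measure : forall k d d', step k d d' -> valid d ->
  (k = Princ -> M d' < M d) /\
  (k = Comm -> M d' <= M d /\ size d' <= size d /\ Phi d' < Phi d).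
Proof.
  induction 1; intros Hv.
  - apply cut_len in Hv. apply Permutation_length in H0.
    destruct H as [H|H]; apply redex_measure in H; try lia;
    simpl; destruct H as [H1 H2]; split; intros Hk;
      [specialize (H1 Hk)| specialize (H2 Hk)|specialize (H1 Hk)| specialize (H2 Hk)]; lia.
  - assert (valid d) by (eapply valid_sub; [exact Hv| apply in_or_app; right; left; auto]).
    destruct (IHstep H0) as [H1 H2]. simpl.
    rewrite !map_app, !list_sum_app. simpl.
    split; intros Hk; [specialize (H1 Hk)| specialize (H2 Hk)];
    destruct (is_cut r); simpl; rewrite ?map_app, ?list_sum_app; simpl; lia.
Qed.

Lemma filter_why : forall D, filter is_whynot (map WhyNot D) = map WhyNot D.
Proof. induction D; simpl; congruence. Qed.

Lemma sum_bound : forall S0 ps,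
  Forall (fun p => M p <= (5 + 2 * Sgen p) * size p) ps ->
  Forall (fun p => Sgen p <= S0) ps ->
  list_sum (map M ps) <= (5 + 2 * S0) * list_sum (map size ps).
Proof.
  intros S0 ps H1 H2. induction H1 as [|x l Hx Hl IH]; simpl; [lia|].
  pose proof (Forall_inv H2) as Hs; pose proof (Forall_inv_tail H2) as Hs'; simpl in Hs.
  assert (M x <= (5 + 2 * S0) * size x)
    by (eapply Nat.le_trans; [exact Hx| apply Nat.mul_le_mono_r; lia]).
  specialize (IH Hs'). nia.
Qed.

Lemma node_bound : forall r G ps, w r G <= 5 + 2 * Sgen (Node r G ps) ->
  Forall (fun p => M p <= (5 + 2 * Sgen p) * size p) ps ->
  M (Node r G ps) <= (5 + 2 * Sgen (Node r G ps)) * size (Node r G ps).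
Proof.
  intros r G ps Hw HF.
  assert (Forall (fun p => Sgen p <= Sgen (Node r G ps)) ps).
  { simpl. apply Forall_forall. intros p Hp.
    assert (Sgen p <= list_max (map Sgen ps)).
    { assert (H := list_max_le (map Sgen ps) (list_max (map Sgen ps))).
      destruct H as [H _]. specialize (H (le_n _)). rewrite Forall_forall in H.
      apply H. apply in_map. auto. }
    lia. }
  pose proof (sum_bound _ _ HF H).
  cbn [M size]. nia.
Qed.

Lemma Permutation_filter : forall (f : formula -> bool) l l', Permutation l l' ->
  Permutation (filter f l) (filter f l').
Proof.
  intros f l l' H. induction H; simpl; auto.
  - destruct (f x); auto.
  - destruct (f x), (f y); auto. apply perm_swap.
  - eapply perm_trans; eauto.
Qed.

Lemma M_init : forall d, valid d -> M d <= (5 + 2 * Sgen d) * size d.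
Proof.
  induction 1; (apply node_bound; [|repeat constructor; auto]); try (simpl; lia).
  assert (HG : length G = S (length D)).
  { apply Permutation_length in H3. simpl in H3. rewrite length_map in H3. auto. }
  assert (HF : length (filter is_whynot G) = length D).
  { apply (Permutation_filter is_whynot) in H3. apply Permutation_length in H3.
    simpl in H3. rewrite filter_why, length_map in H3. auto. }
  simpl. lia.
Qed.

Lemma size_pos : forall d, 1 <= size d.
Proof. intros [r G ps]; simpl; lia. Qed.

Lemma M0_bound : forall d, valid d -> M d <= 7 * (Nat.max 1 (Sgen d) * size d).
Proof.
  intros d H. pose proof (M_init d H). nia.
Qed.

Lemma part2 : exists c : nat, forall (Ds : nat -> deriv) (n : nat),
     valid (Ds 0) -> reduction_seq (fun k => k = Princ) Ds n ->
     n <= c * (Nat.max 1 (Sgen (Ds 0)) * size (Ds 0)) /\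
     (forall i, i <= n -> size (Ds i) <= c * (Nat.max 1 (Sgen (Ds 0)) * size (Ds 0))).
Proof.
  exists 7. intros Ds n H0 Hr.
  assert (Hi : forall i, i <= n -> valid (Ds i) /\ M (Ds i) + i <= M (Ds 0)).
  { induction i; intros Hin. { split; auto; lia. }
    destruct IHi as [Hv HM]; [lia|].
    destruct (Hr i) as [k [Hk [Hs Hv']]]; [lia|]. subst k.
    destruct (step_measure _ _ _ Hs Hv) as [Hp _]. specialize (Hp eq_refl).
    split; auto; lia. }
  pose proof (M0_bound _ H0).
  split.
  - destruct (Hi n (le_n _)). lia.
  - intros i Hin. destruct (Hi i Hin). pose proof (size_le_M (Ds i)). lia.
Qed.

Lemma part1 : exists c : nat, forall (Ds : nat -> deriv) (n : nat),
     valid (Ds 0) -> reduction_seq (fun _ => True) Ds n ->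
     n <= c * (Nat.max 1 (Sgen (Ds 0)) ^ 3 * size (Ds 0) ^ 3) /\
     (forall i, i <= n -> size (Ds i) <= c * (Nat.max 1 (Sgen (Ds 0)) ^ 3 * size (Ds 0) ^ 3)).
Proof.
  exists 1029. intros Ds n H0 Hr.
  set (M0 := M (Ds 0)). set (K := M0 * M0 + 1).
  assert (Hi : forall i, i <= n -> valid (Ds i) /\ M (Ds i) <= M0 /\
            M (Ds i) * K + Phi (Ds i) + i <= M0 * K + Phi (Ds 0)).
  { induction i; intros Hin. { split; auto; unfold M0; lia. }
    destruct IHi as [Hv [HM HP]]; [lia|].
    destruct (Hr i) as [k [_ [Hs Hv']]]; [lia|].
    destruct (step_measure _ _ _ Hs Hv) as [Hp Hc].
    pose proof (Phi_le (Ds (S i))). pose proof (size_le_M (Ds (S i))).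
    destruct k.
    - specialize (Hp eq_refl).
      assert (Phi (Ds (S i)) < K).
      { assert (size (Ds (S i)) * size (Ds (S i)) <= M0 * M0)
          by (apply Nat.mul_le_mono; lia). unfold K; lia. }
      assert ((M (Ds (S i)) + 1) * K <= M (Ds i) * K) by (apply Nat.mul_le_mono_r; lia).
      split; auto. split; [lia|]. nia.
    - destruct (Hc eq_refl) as [Hm [Hsz Hph]].
      assert (M (Ds (S i)) * K <= M (Ds i) * K) by (apply Nat.mul_le_mono_r; lia).
      split; auto. split; [lia|]. lia. }
  pose proof (M0_bound _ H0). fold M0 in H.
  set (X := Nat.max 1 (Sgen (Ds 0)) * size (Ds 0)).
  fold X in H.
  assert (HX : Nat.max 1 (Sgen (Ds 0)) ^ 3 * size (Ds 0) ^ 3 = X * X * X).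
  { unfold X. simpl. ring. }
  rewrite HX.
  assert (1 <= X) by (unfold X; pose proof (size_pos (Ds 0)); nia).
  assert (Hc : M0 * M0 * M0 <= 343 * (X * X * X)).
  { assert (M0 * M0 <= (7 * X) * (7 * X)) by (apply Nat.mul_le_mono; lia).
    assert (M0 * M0 * M0 <= (7 * X) * (7 * X) * (7 * X)) by (apply Nat.mul_le_mono; lia).
    lia. }
  assert (1 <= M0) by (unfold M0; apply M_pos).
  split.
  - destruct (Hi n (le_n _)) as [_ [_ HP]].
    pose proof (Phi_le (Ds 0)). pose proof (size_le_M (Ds 0)). fold M0 in H4.
    assert (size (Ds 0) * size (Ds 0) <= M0 * M0) by (apply Nat.mul_le_mono; lia).
    assert (M0 * K + Phi (Ds 0) <= 3 * (M0 * M0 * M0)) by (unfold K; nia).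
    lia.
  - intros i Hin. destruct (Hi i Hin) as [_ [HM _]]. pose proof (size_le_M (Ds i)).
    assert (X <= X * X * X) by nia. lia.
Qed.

Definition rule_of (d : deriv) : rule := match d with Node r _ _ => r end.

Definition princ (r : rule) (C : formula) : Prop :=
  match r with
  | RTens A B => C = Tens A B | RPar A B => C = Par A B | ROne => C = One | RBot => C = Bot
  | RWk A => C = WhyNot A | RAbs A => C = WhyNot A | RAll A => C = All A | REx A _ => C = Ex A
  | RCp _ => True | RCut _ => True | RAx _ => False | RHyp => False
  end.

Definition pos (r : rule) (C : formula) : Prop :=
  match r with
  | RTens A B => C = Tens A B | ROne => C = One | RAll A => C = All A | RCp A => C = OfC A
  | _ => False
  end.

Definition is_neg (C : formula) : Prop :=
  match C with Par _ _ | Bot | WhyNot _ | Ex _ => True | _ => False end.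

Lemma princ_dec : forall r C, {princ r C} + {~ princ r C}.
Proof.
  destruct r; simpl; intros; try (left; exact I); try (right; intro; contradiction);
  apply formula_eq_dec.
Qed.
Lemma pos_dec : forall r C, {pos r C} + {~ pos r C}.
Proof.
  destruct r; simpl; intros; try (right; intro; contradiction); apply formula_eq_dec.
Qed.

Lemma in_perm : forall (x : formula) l, In x l -> exists l', Permutation l (x :: l').
Proof.
  intros x l H. apply in_split in H. destruct H as [l1 [l2 ->]].
  exists (l1 ++ l2). apply Permutation_sym, Permutation_middle.
Qed.

Lemma perm_in : forall (x : formula) l l', Permutation l (x :: l') -> In x l.
Proof. intros. eapply Permutation_in; [apply Permutation_sym; eauto| left; auto]. Qed.

Lemma in_why : forall X D, In X (map WhyNot D) -> exists Y, X = WhyNot Y /\ In Y D.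
Proof. intros X D H. apply in_map_iff in H. destruct H as [Y [<- HY]]. eauto. Qed.

Lemma wk_build : forall l pi, valid pi ->
  exists t, wk_stack l pi t /\ valid t /\ concl t = map WhyNot l ++ concl pi.
Proof.
  induction l as [|E l IH]; intros pi Hv.
  - exists pi. split; [constructor|auto].
  - destruct (IH pi Hv) as [t [Ht [Hvt Hc]]].
    exists (Node (RWk E) (WhyNot E :: concl t) [t]). split; [constructor; auto|].
    split; [constructor; auto|]. simpl. rewrite Hc. reflexivity.
Qed.

Lemma abs_build : forall l base rest, valid base ->
  Permutation (concl base) (l ++ map WhyNot l ++ rest) ->
  exists t, abs_stack l base t /\ valid t /\ Permutation (concl t) (map WhyNot l ++ rest).
Proof.
  induction l as [|E l IH]; intros base rest Hv Hp.
  - exists base. split; [constructor|auto].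
  - destruct (IH base (E :: WhyNot E :: rest) Hv) as [t [Ht [Hvt Hc]]].
    { perm. }
    exists (Node (RAbs E) (WhyNot E :: map WhyNot l ++ rest) [t]). split; [constructor; auto|].
    split; [|simpl; apply Permutation_refl].
    apply v_abs with (D := map WhyNot l ++ rest); auto; perm.
Qed.

Definition Red C d1 d2 G := exists k res, redex k C d1 d2 res /\ valid res /\ Permutation (concl res) G.

Lemma left_step : forall C d1 d2 G1' G2' G, valid d1 -> valid d2 ->
  Permutation (concl d1) (C :: G1') -> Permutation (concl d2) (dual C :: G2') ->
  Permutation G (G1' ++ G2') -> ~ princ (rule_of d1) C -> Red C d1 d2 G.
Proof.
  intros C d1 e G1' G2' G Hv1 Hv2 Hp1 Hp2 HG Hpr.
  pose proof (perm_in _ _ _ Hp1) as HC.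
  destruct Hv1 as [A H0 Pax | A H0 p1 p2 Ga Gb Hq1 Hq2 P1 P2 P3
    | A B H0 p1 p2 Ga Gb Hq1 Hq2 P1 P2 P3 | A B H0 p D Hq P1 P2 | H0 P
    | H0 p Hq P | A H0 p Hq P | A H0 p D Hq P1 P2 | A H0 p D Hq P1 P2
    | A B H0 p D Hq HB P1 P2 | A H0 p1 p2 D Hq1 Hq2 P1 P2 P3 | H0];
  simpl in Hpr, Hp1, HC.
  -
    assert (HC' : In C [A; dual A]) by (eapply Permutation_in; eauto).
    exists Princ, e. split; [constructor|split; auto].
    destruct HC' as [<-|[<-|[]]].
    + perm.
    + rewrite dual_involutive in Hp2. perm.
  - contradiction.
  -
    eapply Permutation_in in HC; [|exact P3].
    destruct HC as [HC|HC]; [congruence|].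
    apply in_app_or in HC. destruct HC as [HC|HC]; destruct (in_perm _ _ HC) as [l' Hl'].
    + exists Comm, (Node (RTens A B) G [Node (RCut C) (A :: l' ++ G2') [p1; e]; p2]).
      split; [eapply c_tens_l; [exact P3| apply in_or_app; left; auto]|].
      split; [|simpl; apply Permutation_refl].
      apply v_tens with (G1 := l' ++ G2') (G2 := Gb); auto; try perm.
      apply v_cut with (G1 := A :: l') (G2 := G2'); auto; perm.
    + exists Comm, (Node (RTens A B) G [p1; Node (RCut C) (B :: l' ++ G2') [p2; e]]).
      split; [eapply c_tens_r; [exact P3| apply in_or_app; right; auto]|].
      split; [|simpl; apply Permutation_refl].
      apply v_tens with (G1 := Ga) (G2 := l' ++ G2'); auto; try perm.
      apply v_cut with (G1 := B :: l') (G2 := G2'); auto; perm.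
  -
    eapply Permutation_in in HC; [|exact P2].
    destruct HC as [HC|HC]; [congruence|]. destruct (in_perm _ _ HC) as [l' Hl'].
    exists Comm, (Node (RPar A B) G [Node (RCut C) (A :: B :: l' ++ G2') [p; e]]).
    split; [eapply c_unary; [constructor| exact P2| auto]|].
    split; [|simpl; apply Permutation_refl].
    apply v_par with (D := l' ++ G2'); auto; try perm.
    apply v_cut with (G1 := A :: B :: l') (G2 := G2'); auto; perm.
  -
    eapply Permutation_in in HC; [|exact P]. destruct HC as [HC|[]]. congruence.
  -
    eapply Permutation_in in HC; [|exact P].
    destruct HC as [HC|HC]; [congruence|]. destruct (in_perm _ _ HC) as [l' Hl'].
    exists Comm, (Node RBot G [Node (RCut C) (l' ++ G2') [p; e]]).
    split; [eapply c_unary; [constructor| exact P| auto]|].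
    split; [|simpl; apply Permutation_refl].
    apply v_bot; try perm.
    apply v_cut with (G1 := l') (G2 := G2'); auto; perm.
  -
    eapply Permutation_in in HC; [|exact P].
    destruct HC as [HC|HC]; [congruence|]. destruct (in_perm _ _ HC) as [l' Hl'].
    exists Comm, (Node (RWk A) G [Node (RCut C) (l' ++ G2') [p; e]]).
    split; [eapply c_unary; [constructor| exact P| auto]|].
    split; [|simpl; apply Permutation_refl].
    apply v_wk; try perm.
    apply v_cut with (G1 := l') (G2 := G2'); auto; perm.
  -
    eapply Permutation_in in HC; [|exact P2].
    destruct HC as [HC|HC]; [congruence|]. destruct (in_perm _ _ HC) as [l' Hl'].
    exists Comm, (Node (RAbs A) G [Node (RCut C) (A :: WhyNot A :: l' ++ G2') [p; e]]).
    split; [eapply c_unary; [constructor| exact P2| auto]|].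
    split; [|simpl; apply Permutation_refl].
    apply v_abs with (D := l' ++ G2'); auto; try perm.
    apply v_cut with (G1 := A :: WhyNot A :: l') (G2 := G2'); auto; perm.
  -
    eapply Permutation_in in HC; [|exact P2].
    destruct HC as [HC|HC]; [congruence|]. destruct (in_perm _ _ HC) as [l' Hl'].
    exists Comm, (Node (RAll A) G [Node (RCut (lift 0 C)) (A :: map (lift 0) (l' ++ G2')) [p; dlift e]]).
    split; [eapply c_all; [exact P2| auto]|].
    split; [|simpl; apply Permutation_refl].
    apply v_all with (D := l' ++ G2'); auto; try perm.
    apply v_cut with (G1 := A :: map (lift 0) l') (G2 := map (lift 0) G2'); auto.
    + apply valid_dlift; auto.
    + apply (Permutation_map (lift 0)) in Hl'. perm.
    + unfold dlift. rewrite concl_dmap. apply (Permutation_map (lift 0)) in Hp2.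
      simpl in Hp2. rewrite lift_dual in Hp2. exact Hp2.
    + perm.
  -
    eapply Permutation_in in HC; [|exact P2].
    destruct HC as [HC|HC]; [congruence|]. destruct (in_perm _ _ HC) as [l' Hl'].
    exists Comm, (Node (REx A B) G [Node (RCut C) (subst 0 B A :: l' ++ G2') [p; e]]).
    split; [eapply c_unary; [constructor| exact P2| auto]|].
    split; [|simpl; apply Permutation_refl].
    apply v_ex with (D := l' ++ G2'); auto; try perm.
    apply v_cut with (G1 := subst 0 B A :: l') (G2 := G2'); auto; perm.
  - contradiction.
  -
    exists Comm, (Node RHyp G []). split; [constructor|split; [constructor|apply Permutation_refl]].
Qed.

Lemma pos_pair : forall C d1 d2 G1' G2' G, valid d1 -> valid d2 ->
  Permutation (concl d1) (C :: G1') -> Permutation (concl d2) (dual C :: G2') ->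
  Permutation G (G1' ++ G2') -> pos (rule_of d1) C -> princ (rule_of d2) (dual C) ->
  is_cut (rule_of d2) = false -> Red C d1 d2 G.
Proof.
  intros C d1 e G1' G2' G Hv1 Hv2 Hp1 Hp2 HG Hpos Hpr Hnc.
  pose proof (perm_in _ _ _ Hp2) as HC2.
  destruct Hv1 as [A H0 Pax | A H0 p1 p2 Ga Gb Hq1 Hq2 P1 P2 P3
    | A B H0 p1 p2 Ga Gb Hq1 Hq2 P1 P2 P3 | A B H0 p D Hq P1 P2 | H0 P
    | H0 p Hq P | A H0 p Hq P | A H0 p D Hq P1 P2 | A H0 p D Hq P1 P2
    | A B H0 p D Hq HB P1 P2 | A H0 p1 p2 D Hq1 Hq2 P1 P2 P3 | H0];
  simpl in Hpos, Hp1; try contradiction; subst C; simpl in Hp2, HC2, Hpr;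
  (destruct Hv2 as [A' H2 Rax | A' H2 q1 q2 Ga' Gb' Rq1 Rq2 R1 R2 R3
    | A' B' H2 q1 q2 Ga' Gb' Rq1 Rq2 R1 R2 R3 | A' B' H2 q Dq Rq R1 R2 | H2 R
    | H2 q Rq R | A' H2 q Rq R | A' H2 q Dq Rq R1 R2 | A' H2 q Dq Rq R1 R2
    | A' B' H2 q Dq Rq RB R1 R2 | A' H2 q1 q2 Dq Rq1 Rq2 R1 R2 R3 | H2];
   simpl in Hpr, Hnc, Hp2, HC2; try contradiction; try discriminate;
   try (eapply Permutation_in in HC2; [|exact R3]; destruct HC2 as [HC2|HC2];
        [discriminate| apply in_why in HC2; destruct HC2 as [? [? ?]]; discriminate])).
  -
    injection Hpr as E1 E2; subst A' B'.
    exists Princ, (Node (RCut A) G [p1; Node (RCut B) (Gb ++ dual A :: Dq) [p2; q]]).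
    split; [apply r_tens|]. split; [|apply Permutation_refl].
    apply v_cut with (G1 := Ga) (G2 := Gb ++ Dq); auto; try perm.
    apply v_cut with (G1 := Gb) (G2 := dual A :: Dq); auto; perm.
  -
    exists Princ, q. split; [apply r_one|split; auto; perm].
  -
    injection Hpr as E1; subst A'.
    exists Princ, (Node (RCut (subst 0 B' A)) G [dsubst B' p; q]).
    split; [apply r_all|]. split; [|apply Permutation_refl].
    apply v_cut with (G1 := D) (G2 := Dq).
    + apply valid_dsubst; auto.
    + auto.
    + unfold dsubst. rewrite concl_dmap.
      eapply Permutation_trans; [apply Permutation_map; exact P1|].
      cbn [map Nat.iter]. rewrite map_map.
      rewrite (map_ext _ (fun x => x)) by (intros; apply subst_lift_cancel).
      rewrite map_id. apply Permutation_refl.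
    + rewrite subst_dual in R1. exact R1.
    + perm.
  -
    injection Hpr as E1; subst A'.
    destruct (wk_build D q Rq) as [t [Ht [Hvt Hct]]].
    exists Princ, t. split; [eapply r_cpw; [exact P3| exact Ht]|]. split; auto.
    rewrite Hct. perm.
  -
    injection Hpr as E1; subst A'.
    assert (Hvb : valid (Node (RCut A) (D ++ map WhyNot D ++ Dq)
               [p1; Node (RCut (OfC A)) (map WhyNot D ++ dual A :: Dq) [p2; q]])).
    { apply v_cut with (G1 := D) (G2 := map WhyNot D ++ Dq); auto; try perm.
      apply v_cut with (G1 := map WhyNot D) (G2 := dual A :: Dq); auto; perm. }
    destruct (abs_build D _ Dq Hvb) as [t [Ht [Hvt Hct]]]; [apply Permutation_refl|].
    exists Princ, t. split; [eapply r_cpb; [exact P3| exact Ht]|]. split; auto. perm.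
  -
    eapply Permutation_in in HC2; [|exact R3]. destruct HC2 as [HC2|HC2]; [discriminate|].
    apply in_why in HC2. destruct HC2 as [Y [EY HY]]. injection EY as EY. subst Y.
    destruct (in_perm _ _ HY) as [l' Hl'].
    pose proof (Permutation_map WhyNot Hl') as Hl'w.
    exists Princ, (Node (RCp A') G [Node (RCut A) (D ++ A' :: l') [p1; q1];
                    Node (RCut (OfC A)) (map WhyNot D ++ OfC A' :: map WhyNot l') [p2; q2]]).
    split; [apply r_cpcp|]. split; [|apply Permutation_refl].
    apply v_cp with (D := D ++ l'); try perm.
    + apply v_cut with (G1 := D) (G2 := A' :: l'); auto; perm.
    + apply v_cut with (G1 := map WhyNot D) (G2 := OfC A' :: map WhyNot l'); auto; perm.
Qed.

Lemma neg_shape : forall d C, valid d -> is_cut (rule_of d) = false -> princ (rule_of d) C ->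
  ~ pos (rule_of d) C -> In C (concl d) -> is_neg C.
Proof.
  intros d C Hv Hnc Hpr Hpos HC.
  destruct Hv as [A H0 Pax | A H0 p1 p2 Ga Gb Hq1 Hq2 P1 P2 P3
    | A B H0 p1 p2 Ga Gb Hq1 Hq2 P1 P2 P3 | A B H0 p D Hq P1 P2 | H0 P
    | H0 p Hq P | A H0 p Hq P | A H0 p D Hq P1 P2 | A H0 p D Hq P1 P2
    | A B H0 p D Hq HB P1 P2 | A H0 p1 p2 D Hq1 Hq2 P1 P2 P3 | H0];
  simpl in *; try discriminate; try contradiction; try (subst; simpl; auto; fail).
  eapply Permutation_in in HC; [|exact P3]. destruct HC as [HC|HC]; [congruence|].
  apply in_why in HC. destruct HC as [Y [-> _]]. simpl. auto.
Qed.

Lemma root_red : forall C d1 d2 G1' G2' G, valid d1 -> valid d2 ->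
  Permutation (concl d1) (C :: G1') -> Permutation (concl d2) (dual C :: G2') ->
  Permutation G (G1' ++ G2') ->
  is_cut (rule_of d1) = false -> is_cut (rule_of d2) = false ->
  exists k res, (redex k C d1 d2 res \/ redex k (dual C) d2 d1 res) /\ valid res /\
    Permutation (concl res) G.
Proof.
  intros C d1 d2 G1' G2' G Hv1 Hv2 Hp1 Hp2 HG Hn1 Hn2.
  assert (Hp1' : Permutation (concl d1) (dual (dual C) :: G1')) by (rewrite dual_involutive; auto).
  assert (HG' : Permutation G (G2' ++ G1')) by (eapply Permutation_trans; [exact HG| apply Permutation_app_comm]).
  destruct (princ_dec (rule_of d1) C) as [P1|P1].
  2:{ destruct (left_step C d1 d2 G1' G2' G Hv1 Hv2 Hp1 Hp2 HG P1) as [k [res [H1 H2]]].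
      exists k, res. auto. }
  destruct (princ_dec (rule_of d2) (dual C)) as [P2|P2].
  2:{ destruct (left_step (dual C) d2 d1 G2' G1' G Hv2 Hv1 Hp2 Hp1' HG' P2) as [k [res [H1 H2]]].
      exists k, res. auto. }
  destruct (pos_dec (rule_of d1) C) as [Q1|Q1].
  { destruct (pos_pair C d1 d2 G1' G2' G Hv1 Hv2 Hp1 Hp2 HG Q1 P2 Hn2) as [k [res [H1 H2]]].
    exists k, res. auto. }
  destruct (pos_dec (rule_of d2) (dual C)) as [Q2|Q2].
  { assert (P1' : princ (rule_of d1) (dual (dual C))) by (rewrite dual_involutive; auto).
    destruct (pos_pair (dual C) d2 d1 G2' G1' G Hv2 Hv1 Hp2 Hp1' HG' Q2 P1' Hn1) as [k [res [H1 H2]]].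
    exists k, res. auto. }
  exfalso.
  pose proof (neg_shape d1 C Hv1 Hn1 P1 Q1 (perm_in _ _ _ Hp1)) as N1.
  pose proof (neg_shape d2 (dual C) Hv2 Hn2 P2 Q2 (perm_in _ _ _ Hp2)) as N2.
  destruct C; simpl in *; auto.
Qed.

Lemma step_concl : forall k d d', step k d d' -> Permutation (concl d') (concl d).
Proof. induction 1; simpl; auto. Qed.

Lemma valid_replace : forall r G ps1 d ps2 d', valid (Node r G (ps1 ++ d :: ps2)) ->
  valid d' -> Permutation (concl d') (concl d) -> valid (Node r G (ps1 ++ d' :: ps2)).
Proof.
  intros r G ps1 d ps2 d' H Hv Hp.
  destruct ps1 as [|x [|y ps1]]; simpl in *;
  inversion H; subst;
  try (destruct ps1; discriminate);
  econstructor; eauto; eapply Permutation_trans; eauto.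
  all: apply perm_skip; apply Permutation_sym; auto.
Qed.

Lemma exists_step : forall d, valid d -> has_cut d = true -> exists k d', cut_step k d d'.
Proof.
  intros d. induction d as [r G ps IH] using deriv_ind'. intros Hv Hc.
  simpl in Hc. destruct (existsb has_cut ps) eqn:E.
  - apply existsb_exists in E. destruct E as [p [Hin Hp]].
    rewrite Forall_forall in IH.
    destruct (IH p Hin (valid_sub _ _ _ _ Hv Hin) Hp) as [k [p' [Hs Hv']]].
    apply in_split in Hin. destruct Hin as [ps1 [ps2 ->]].
    exists k, (Node r G (ps1 ++ p' :: ps2)). split.
    + constructor; auto.
    + eapply valid_replace; eauto. apply step_concl in Hs; auto.
  - rewrite Bool.orb_false_r in Hc. destruct r; try discriminate.
    inversion Hv; subst. simpl in E.
    apply Bool.orb_false_iff in E. destruct E as [E1 E2].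
    rewrite Bool.orb_false_r in E2.
    assert (N1 : is_cut (rule_of d1) = false).
    { destruct d1; simpl in *. apply Bool.orb_false_iff in E1. tauto. }
    assert (N2 : is_cut (rule_of d2) = false).
    { destruct d2; simpl in *. apply Bool.orb_false_iff in E2. tauto. }
    destruct (root_red f d1 d2 G1 G2 G H2 H3 H4 H5 H6 N1 N2) as [k [res [Hr [Hvr Hpr]]]].
    exists k, res. split; auto. constructor; auto.
Qed.

Lemma part3 : forall (Ds : nat -> deriv) (n : nat),
     valid (Ds 0) -> reduction_seq (fun _ => True) Ds n -> normal (Ds n) ->
     cut_free (Ds n).
Proof.
  intros Ds n H0 Hr Hn. unfold cut_free.
  destruct (has_cut (Ds n)) eqn:E; auto. exfalso. apply Hn.
  apply exists_step; auto.
  destruct n; auto. destruct (Hr n) as [k [_ [_ Hv]]]; auto.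
Qed.
Theorem mainTheorem5 :
  (* 1. arbitrary steps: O(S(D)^3 * |D|^3) *)
  (exists c : nat, forall (Ds : nat -> deriv) (n : nat),
     valid (Ds 0) -> reduction_seq (fun _ => True) Ds n ->
     n <= c * (Nat.max 1 (Sgen (Ds 0)) ^ 3 * size (Ds 0) ^ 3) /\
     (forall i, i <= n -> size (Ds i) <= c * (Nat.max 1 (Sgen (Ds 0)) ^ 3 * size (Ds 0) ^ 3)))
  /\
  (* 2. principal steps only: O(S(D) * |D|) *)
  (exists c : nat, forall (Ds : nat -> deriv) (n : nat),
     valid (Ds 0) -> reduction_seq (fun k => k = Princ) Ds n ->
     n <= c * (Nat.max 1 (Sgen (Ds 0)) * size (Ds 0)) /\
     (forall i, i <= n -> size (Ds i) <= c * (Nat.max 1 (Sgen (Ds 0)) * size (Ds 0))))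
  /\
  (* 3. maximal reduction sequences end in cut-free derivations *)
  (forall (Ds : nat -> deriv) (n : nat),
     valid (Ds 0) -> reduction_seq (fun _ => True) Ds n -> normal (Ds n) ->
     cut_free (Ds n)).
Proof.
  split; [exact part1|]. split; [exact part2|]. exact part3.
Qed.
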